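(* Let $t_0,t_1$ be closed terms with $t_0\approx_{\emptyset}t_1$. Let $\mathcal E_0$ be the set of pairs of closed normal forms related by $\widetilde{\approx_{\emptyset}}$. Then for every context $C$ such that $C[t_0]$ and $C[t_1]$ are closed, $C[t_0]\approx_{\mathcal E_0}C[t_1]$.
   Context: Terms of $\lambda_S$: $t ::= x \mid \lambda x.t \mid t\,t \mid \mathcal{S}k.t \mid \langle t\rangle$ (shift binds $k$; $\langle\cdot\rangle$ reset), up to $\alpha$-conversion. Values $v::=\lambda x.t$. Pure contexts $E ::= \Box \mid v\,E \mid E\,t$; evaluation contexts $F ::= \Box \mid v\,F \mid F\,t \mid \langle F\rangle$; contexts $C ::= \Box \mid \lambda x.C \mid t\,C \mid C\,t \mid \mathcal{S}k.C \mid \langle C\rangle$. Reduction: $F[(\lambda x.t)v]\to F[t\{v/x\}]$; $F[\langle E[\mathcal Sk.t]\rangle]\to F[\langle t\{\lambda x.\langle E[x]\rangle/k\}\rangle]$ ($x\notin\mathrm{fv}(E)$); $F[\langle v\rangle]\to F[v]$; $\to^*$ reflexive-transitive closure. Stuck term: not a value and irreducible; normal form: value or stuck term. Closures: for $R$ a relation on closed terms, $\widetilde R$ is the smallest relation containing $R$, all $(x,x)$, closed under all term constructors, restricted to closed terms; $\widehat R$ is the smallest relation on closed evaluation contexts with $\Box\widehat R\Box$, $v_0F_0\widehat Rv_1F_1$ if $F_0\widehat RF_1,v_0\widetilde Rv_1$; $F_0t_0\widehat RF_1t_1$ if $F_0\widehat RF_1,t_0\widetilde Rt_1$; $\langle F_0\rangle\widehat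 R\langle F_1\rangle$ if $F_0\widehat RF_1$. Environmental bisimilarity: an environment $\mathcal E$ is a relation on closed normal forms relating values only with values and stuck terms only with stuck terms; an environmental relation $\mathcal X$ is a set of environments and triples $(\mathcal E,t_0,t_1)$ with $t_0,t_1$ closed, written $t_0\mathcal X_{\mathcal E}t_1$. $\mathcal X$ is an environmental bisimulation if (1) whenever $t_0\mathcal X_{\mathcal E}t_1$: (a) $t_0\to t_0'$ implies $t_1\to^*t_1'$ with $t_0'\mathcal X_{\mathcal E}t_1'$; (b) if $t_0$ is a value $v_0$ then $t_1\to^*v_1$, a value, with $\mathcal E\cup\{(v_0,v_1)\}\in\mathcal X$; (c) if $t_0$ is stuck then $t_1\to^*t_1'$ stuck with $\mathcal E\cup\{(t_0,t_1')\}\in\mathcal X$; (d) symmetric conditions for $t_1$; (2) whenever $\mathcal E\in\mathcal X$: (a) $(\lambda x.t_0)\mathcal E(\lambda x.t_1)$ and $v_0\widetilde{\mathcal E}v_1$ imply $t_0\{v_0/x\}\mathcal X_{\mathcal E}t_1\{v_1/x\}$; (b) $E_0[\mathcal Sk.t_0]\mathcal EE_1[\mathcal Sk.t_1]$ and pure $E_0'\widehat{\mathcal E}E_1'$ imply $\langle t_0\{\lambda x.\langle E_0'[E_0[x]]\rangle/k\}\rangle\mathcal X_{\mathcal E}\langle t_1\{\lambda x.\langle E_1'[E_1[x]]\rangle/k\}\rangle$, $x$ fresh. $\approx$ is the largest environmental bisimulation; $t_0\approx_{\mathcal E}t_1$ means $(\mathcal E,t_0,t_1)\in\approx$; $\approx_\emptyset$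 is viewed as a relation on closed terms. *)

(* Defs.v *)
(* lambda_S (shift/reset) with de Bruijn indices
   (terms up to alpha-conversion), and environmental bisimilarity. *)
From Stdlib Require Import Arith.

Inductive term : Type :=
| Var : nat -> term
| Lam : term -> term
| App : term -> term -> term
| Shift : term -> term          (* S k. t       : body binds index 0 (= k) *)
| Reset : term -> term.

Fixpoint wf (k : nat) (t : term) : Prop :=
  match t with
  | Var n => n < k
  | Lam b => wf (S k) b
  | App a b => wf k a /\ wf k b
  | Shift b => wf (S k) b
  | Reset b => wf k b
  end.

Definition closed (t : term) : Prop := wf 0 t.

Definition is_value (t : term) : Prop :=
  match t with Lam _ => True | _ => False end.

Fixpoint lift (c : nat) (t : term) : term :=
  match t with
  | Var n => if n <? c then Var n else Var (S n)
  | Lam b => Lam (lift (S c) b)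
  | App a b => App (lift c a) (lift c b)
  | Shift b => Shift (lift (S c) b)
  | Reset b => Reset (lift c b)
  end.

(* capture-avoiding substitution of s for index j (removing that binder) *)
Fixpoint subst (j : nat) (s : term) (t : term) : term :=
  match t with
  | Var n => if n =? j then s else if n <? j then Var n else Var (pred n)
  | Lam b => Lam (subst (S j) (lift 0 s) b)
  | App a b => App (subst j s a) (subst j s b)
  | Shift b => Shift (subst (S j) (lift 0 s) b)
  | Reset b => Reset (subst j s b)
  end.

(* t{v/x} where x is the outermost bound variable of the body t *)
Definition subst0 (t v : term) : term := subst 0 v t.

(* evaluation-context skeletons; F ::= [] | v F | F t | <F>  *)
Inductive ectx : Type :=
| EHole : ectx
| EAppR : term -> ectx -> ectx
| EAppL : ectx -> term -> ectx
| EReset : ectx -> ectx.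

Fixpoint plugE (F : ectx) (t : term) : term :=
  match F with
  | EHole => t
  | EAppR v F' => App v (plugE F' t)
  | EAppL F' u => App (plugE F' t) u
  | EReset F' => Reset (plugE F' t)
  end.

Fixpoint liftE (c : nat) (F : ectx) : ectx :=
  match F with
  | EHole => EHole
  | EAppR v F' => EAppR (lift c v) (liftE c F')
  | EAppL F' u => EAppL (liftE c F') (lift c u)
  | EReset F' => EReset (liftE c F')
  end.

Fixpoint is_eval (F : ectx) : Prop :=
  match F with
  | EHole => True
  | EAppR v F' => is_value v /\ is_eval F'
  | EAppL F' _ => is_eval F'
  | EReset F' => is_eval F'
  end.

Fixpoint is_pure (F : ectx) : Prop :=
  match F with
  | EHole => True
  | EAppR v F' => is_value v /\ is_pure F'
  | EAppL F' _ => is_pure F'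
  | EReset _ => False
  end.

Inductive ctx : Type :=
| CHole : ctx
| CLam : ctx -> ctx
| CAppR : term -> ctx -> ctx
| CAppL : ctx -> term -> ctx
| CShift : ctx -> ctx
| CReset : ctx -> ctx.

(* plugging may capture variables *)
Fixpoint plugC (C : ctx) (t : term) : term :=
  match C with
  | CHole => t
  | CLam C' => Lam (plugC C' t)
  | CAppR u C' => App u (plugC C' t)
  | CAppL C' u => App (plugC C' t) u
  | CShift C' => Shift (plugC C' t)
  | CReset C' => Reset (plugC C' t)
  end.

Inductive step : term -> term -> Prop :=
| step_beta : forall F t v, is_eval F -> is_value v ->
    step (plugE F (App (Lam t) v)) (plugE F (subst0 t v))
| step_shift : forall F E t, is_eval F -> is_pure E ->
    step (plugE F (Reset (plugE E (Shift t))))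
         (plugE F (Reset (subst0 t (Lam (Reset (plugE (liftE 0 E) (Var 0)))))))
| step_reset : forall F v, is_eval F -> is_value v ->
    step (plugE F (Reset v)) (plugE F v).

Inductive steps : term -> term -> Prop :=
| steps_refl : forall t, steps t t
| steps_step : forall t t' t'', step t t' -> steps t' t'' -> steps t t''.

Definition stuck (t : term) : Prop := ~ is_value t /\ forall t', ~ step t t'.
Definition normal_form (t : term) : Prop := is_value t \/ stuck t.

Definition rel := term -> term -> Prop.

(* R~ (compatible closure, before restriction to closed terms) *)
Inductive tildeI (R : rel) : rel :=
| ti_base : forall a b, R a b -> tildeI R a b
| ti_var : forall n, tildeI R (Var n) (Var n)
| ti_lam : forall a b, tildeI R a b -> tildeI R (Lam a) (Lam b)
| ti_app : forall a b c d, tildeI R a b -> tildeI R c d ->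
    tildeI R (App a c) (App b d)
| ti_shift : forall a b, tildeI R a b -> tildeI R (Shift a) (Shift b)
| ti_reset : forall a b, tildeI R a b -> tildeI R (Reset a) (Reset b).

Definition tilde (R : rel) : rel :=
  fun a b => tildeI R a b /\ closed a /\ closed b.

Inductive hat (R : rel) : ectx -> ectx -> Prop :=
| hat_hole : hat R EHole EHole
| hat_appR : forall v0 v1 F0 F1, is_value v0 -> is_value v1 ->
    hat R F0 F1 -> tilde R v0 v1 -> hat R (EAppR v0 F0) (EAppR v1 F1)
| hat_appL : forall F0 F1 t0 t1, hat R F0 F1 -> tilde R t0 t1 ->
    hat R (EAppL F0 t0) (EAppL F1 t1)
| hat_reset : forall F0 F1, hat R F0 F1 -> hat R (EReset F0) (EReset F1).

Definition is_env (E : rel) : Prop :=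
  forall a b, E a b ->
    closed a /\ closed b /\ normal_form a /\ normal_form b /\
    ((is_value a /\ is_value b) \/ (stuck a /\ stuck b)).

Definition add_pair (E : rel) (a b : term) : rel :=
  fun x y => E x y \/ (x = a /\ y = b).

Record envrel : Type := {
  envs : rel -> Prop;
  trip : rel -> term -> term -> Prop
}.

Definition envrel_wf (X : envrel) : Prop :=
  (forall E, envs X E -> is_env E) /\
  (forall E t0 t1, trip X E t0 t1 -> is_env E /\ closed t0 /\ closed t1).

Definition env_bisim (X : envrel) : Prop :=
  envrel_wf X /\
  (forall E t0 t1, trip X E t0 t1 ->
     (forall t0', step t0 t0' -> exists t1', steps t1 t1' /\ trip X E t0' t1') /\
     (is_value t0 -> exists v1, steps t1 v1 /\ is_value v1 /\
                                envs X (add_pair E t0 v1)) /\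
     (stuck t0 -> exists t1', steps t1 t1' /\ stuck t1' /\
                              envs X (add_pair E t0 t1')) /\
     (forall t1', step t1 t1' -> exists t0', steps t0 t0' /\ trip X E t0' t1') /\
     (is_value t1 -> exists v0, steps t0 v0 /\ is_value v0 /\
                                envs X (add_pair E v0 t1)) /\
     (stuck t1 -> exists t0', steps t0 t0' /\ stuck t0' /\
                              envs X (add_pair E t0' t1))) /\
  (forall E, envs X E ->
     (forall b0 b1 v0 v1, E (Lam b0) (Lam b1) -> is_value v0 -> is_value v1 ->
        tilde E v0 v1 -> trip X E (subst0 b0 v0) (subst0 b1 v1)) /\
     (forall E0 E1 s0 s1, is_pure E0 -> is_pure E1 ->
        E (plugE E0 (Shift s0)) (plugE E1 (Shift s1)) ->
        forall E0' E1', is_pure E0' -> is_pure E1' -> hat E E0' E1' ->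
        trip X E
          (Reset (subst0 s0 (Lam (Reset (plugE (liftE 0 E0') (plugE (liftE 0 E0) (Var 0)))))))
          (Reset (subst0 s1 (Lam (Reset (plugE (liftE 0 E1') (plugE (liftE 0 E1) (Var 0))))))))).

Definition approx (E : rel) (t0 t1 : term) : Prop :=
  exists X, env_bisim X /\ trip X E t0 t1.

Definition empty_rel : rel := fun _ _ => False.

Definition approx0 : rel := fun t0 t1 => approx empty_rel t0 t1.

Definition E0 : rel :=
  fun a b => normal_form a /\ normal_form b /\ tilde approx0 a b.

(* Main.v *)
Require Import Defs.
From Stdlib Require Import Arith Lia List Classical.
Import ListNotations.

Ltac cmp := repeat (match goal with
  | |- context [?a =? ?b] => destruct (Nat.eqb_spec a b)
  | |- context [?a <? ?b] => destruct (Nat.ltb_spec a b)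
  end; simpl).

Lemma wf_weak : forall t k k', wf k t -> k <= k' -> wf k' t.
Proof. induction t; simpl; intros; try lia.
  - eapply IHt; eauto; lia.
  - intuition eauto.
  - eapply IHt; eauto; lia.
  - eauto. Qed.

Lemma lift_wf_id : forall t k c, wf k t -> k <= c -> lift c t = t.
Proof. induction t; simpl; intros.
  - cmp; auto; lia.
  - f_equal; eapply IHt; eauto; lia.
  - destruct H; f_equal; eauto.
  - f_equal; eapply IHt; eauto; lia.
  - f_equal; eauto. Qed.

Lemma lift_closed : forall t c, closed t -> lift c t = t.
Proof. intros; eapply lift_wf_id; eauto; lia. Qed.

Lemma subst_wf_id : forall t k j s, wf k t -> k <= j -> subst j s t = t.
Proof. induction t; simpl; intros.
  - cmp; auto; lia.
  - f_equal; eapply IHt; eauto; lia.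
  - destruct H; f_equal; eauto.
  - f_equal; eapply IHt; eauto; lia.
  - f_equal; eauto. Qed.

Lemma subst_closed : forall t j s, closed t -> subst j s t = t.
Proof. intros; eapply subst_wf_id; eauto; lia. Qed.

Lemma wf_subst : forall t k j s, wf (S k) t -> closed s -> j <= k -> wf k (subst j s t).
Proof. induction t; simpl; intros.
  - cmp; try lia. eapply wf_weak; eauto; lia.
  - rewrite lift_closed by auto. apply IHt; auto; lia.
  - destruct H; split; eauto.
  - rewrite lift_closed by auto. apply IHt; auto; lia.
  - eauto. Qed.

Lemma closed_subst0 : forall t s, wf 1 t -> closed s -> closed (subst0 t s).
Proof. intros; apply wf_subst; auto. Qed.

Lemma subst_comm : forall t i j v w, closed v -> closed w -> i <= j ->
  subst i w (subst (S j) v t) = subst j v (subst i w t).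
Proof. induction t; intros i j v w Hv Hw Hij; simpl.
  - cmp; try lia; try reflexivity;
    try (rewrite subst_closed by auto; reflexivity);
    try (rewrite (subst_closed w) by auto; reflexivity);
    try (f_equal; lia).
  - rewrite !lift_closed by auto. f_equal. apply IHt; auto; lia.
  - f_equal; auto.
  - rewrite !lift_closed by auto. f_equal. apply IHt; auto; lia.
  - f_equal; auto. Qed.
Fixpoint msubst (vs : list term) (t : term) : term :=
  match vs with nil => t | v :: vs' => msubst vs' (subst 0 v t) end.

Fixpoint ins (j : nat) (v : term) (vs : list term) : list term :=
  match j, vs with
  | 0, _ => v :: vs
  | S j', w :: ws => w :: ins j' v ws
  | S _, nil => v :: nil
  end.

Lemma msubst_ins : forall vs j v t, Forall closed vs -> closed v -> j <= length vs ->
  msubst vs (subst j v t) = msubst (ins j v vs) t.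
Proof. induction vs; intros j v t Hvs Hv Hj; destruct j; simpl in *; try reflexivity; try lia.
  inversion Hvs; subst. rewrite subst_comm by (auto; lia). apply IHvs; auto; lia. Qed.

Lemma length_ins : forall j v vs, length (ins j v vs) = S (length vs).
Proof. induction j; destruct vs; simpl; auto. Qed.

Lemma Forall_ins : forall (P : term -> Prop) j v vs, Forall P vs -> P v -> Forall P (ins j v vs).
Proof. induction j; destruct vs; simpl; intros; auto. inversion H; subst; constructor; auto. Qed.

Lemma msubst_closed : forall vs t, closed t -> msubst vs t = t.
Proof. induction vs; simpl; intros; auto. rewrite subst_closed; auto. Qed.

Fixpoint compE (A B : ectx) : ectx :=
  match A with
  | EHole => B
  | EAppR v A' => EAppR v (compE A' B)
  | EAppL A' u => EAppL (compE A' B) u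
  | EReset A' => EReset (compE A' B)
  end.

Lemma plugE_comp : forall A B t, plugE (compE A B) t = plugE A (plugE B t).
Proof. induction A; simpl; intros; f_equal; auto. Qed.
Lemma liftE_comp : forall A B c, liftE c (compE A B) = compE (liftE c A) (liftE c B).
Proof. induction A; simpl; intros; f_equal; auto. Qed.
Lemma is_eval_comp : forall A B, is_eval A -> is_eval B -> is_eval (compE A B).
Proof. induction A; simpl; intuition. Qed.
Lemma is_pure_comp : forall A B, is_pure A -> is_pure B -> is_pure (compE A B).
Proof. induction A; simpl; intuition. Qed.
Lemma pure_eval : forall E, is_pure E -> is_eval E.
Proof. induction E; simpl; intuition. Qed.

Fixpoint wfE (k : nat) (F : ectx) : Prop :=
  match F with
  | EHole => True
  | EAppR v F' => wf k v /\ wfE k F'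
  | EAppL F' u => wfE k F' /\ wf k u
  | EReset F' => wfE k F'
  end.

Lemma wf_plugE : forall F k t, wf k (plugE F t) <-> wfE k F /\ wf k t.
Proof. induction F; simpl; intros; try rewrite IHF; intuition. Qed.

Lemma wfE_weak : forall F k k', wfE k F -> k <= k' -> wfE k' F.
Proof. induction F; simpl; intuition eauto using wf_weak. Qed.

Lemma liftE_wf_id : forall F k c, wfE k F -> k <= c -> liftE c F = F.
Proof. induction F; simpl; intuition; f_equal; eauto using lift_wf_id. Qed.

Lemma wfE_comp : forall A B k, wfE k (compE A B) <-> wfE k A /\ wfE k B.
Proof. induction A; simpl; intros; try rewrite IHA; intuition. Qed.

Definition kont (G E : ectx) : term :=
  Lam (Reset (plugE (liftE 0 G) (plugE (liftE 0 E) (Var 0)))).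

Lemma kont_comp : forall G A B, kont G (compE A B) = kont (compE G A) B.
Proof. intros; unfold kont. rewrite !liftE_comp, !plugE_comp. reflexivity. Qed.

Lemma kont_closed : forall G E, wfE 0 G -> wfE 0 E -> closed (kont G E).
Proof. intros; unfold kont, closed; simpl.
  rewrite (liftE_wf_id G 0), (liftE_wf_id E 0) by (auto; lia).
  apply wf_plugE; split. eapply wfE_weak; eauto.
  apply wf_plugE; split. eapply wfE_weak; eauto. simpl; lia. Qed.

Lemma tildeI_refl : forall R t, tildeI R t t.
Proof. induction t; [apply ti_var|apply ti_lam|apply ti_app|apply ti_shift|apply ti_reset]; auto. Qed.

Lemma tildeI_mono : forall (R R' : rel), (forall a b, R a b -> R' a b) ->
  forall a b, tildeI R a b -> tildeI R' a b.
Proof. intros R R' HR a b H; induction H; [apply ti_base|apply ti_var|apply ti_lam|apply ti_app|apply ti_shift|apply ti_reset]; auto. Qed.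

Lemma tildeI_plugC : forall R C a b, tildeI R a b -> tildeI R (plugC C a) (plugC C b).
Proof. induction C; simpl; intros; auto;
  [apply ti_lam|apply ti_app|apply ti_app|apply ti_shift|apply ti_reset]; auto using tildeI_refl. Qed.
Inductive redex : term -> Prop :=
| rbeta : forall t v, is_value v -> redex (App (Lam t) v)
| rshift : forall E t, is_pure E -> redex (Reset (plugE E (Shift t)))
| rreset : forall v, is_value v -> redex (Reset v).

Lemma plug_redex_notval : forall F r, redex r -> ~ is_value (plugE F r).
Proof. destruct F; simpl; intros r Hr; auto. inversion Hr; simpl; auto. Qed.

Lemma pure_shift_notval : forall E t, ~ is_value (plugE E (Shift t)).
Proof. destruct E; simpl; auto. Qed.

Lemma pure_shift_not_plug : forall E t F r, is_pure E -> is_eval F -> redex r ->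
  plugE E (Shift t) <> plugE F r.
Proof. induction E; intros s F r HE HF Hr Heq; simpl in *.
  - destruct F; simpl in Heq; try discriminate. subst. inversion Hr.
  - destruct HE as [Hv HE]. destruct F; simpl in *; try discriminate.
    + subst r. inversion Hr; subst. eapply pure_shift_notval; eauto.
    + injection Heq; intros. destruct HF. eapply IHE; eauto.
    + injection Heq; intros H1 H2. subst. eapply plug_redex_notval; eauto.
  - destruct F; simpl in *; try discriminate.
    + subst r. inversion Hr; subst. destruct E; simpl in *; discriminate.
    + injection Heq; intros H1 H2. subst. destruct HF as [Hv _].
      eapply pure_shift_notval; eauto.
    + injection Heq; intros. eapply IHE; eauto.
  - contradiction.
Qed.
Ltac notval_tac := exfalso;
  match goal with
  | H : is_value (plugE ?F ?r) |- _ => solve [apply (plug_redex_notval F r); auto]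
  | H : plugE ?F ?r = ?v |- _ => solve [apply (plug_redex_notval F r); auto; rewrite H; simpl; auto]
  | H : ?v = plugE ?F ?r |- _ => solve [apply (plug_redex_notval F r); auto; rewrite <- H; simpl; auto]
  end.

Lemma redex_no_inner : forall r F r', redex r -> is_eval F -> redex r' -> plugE F r' = r -> F = EHole.
Proof. intros r F r' Hr HF Hr' Heq. destruct F; auto; exfalso; simpl in *.
  - destruct HF as [Hv HF]. inversion Hr; subst; try discriminate.
    injection H0; intros; subst. notval_tac.
  - inversion Hr; subst; try discriminate.
    injection H0; intros; subst. notval_tac.
  - inversion Hr; subst; try discriminate.
    + injection H0; intros. eapply pure_shift_not_plug; eauto.
    + injection H0; intros; subst. notval_tac.
Qed.

Lemma decomp_unique : forall F F' r r', is_eval F -> is_eval F' -> redex r -> redex r' ->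
  plugE F r = plugE F' r' -> F = F' /\ r = r'.
Proof. induction F; intros F' r r' HF HF' Hr Hr' Heq; simpl in *.
  - assert (F' = EHole) by (eapply redex_no_inner; [ | | | first [exact Heq | symmetry; exact Heq]]; eauto). subst; simpl in *; split; auto.
  - destruct F'; simpl in *.
    + exfalso. assert (EAppR t F = EHole) by (eapply redex_no_inner; [ | | | first [exact Heq | symmetry; exact Heq]]; eauto). discriminate.
    + injection Heq; intros. destruct HF, HF'. destruct (IHF F' r r'); auto. subst; split; auto.
    + injection Heq; intros. destruct HF. notval_tac.
    + discriminate.
  - destruct F'; simpl in *.
    + exfalso. assert (EAppL F t = EHole) by (eapply redex_no_inner; [ | | | first [exact Heq | symmetry; exact Heq]]; eauto). discriminate.
    + injection Heq; intros. destruct HF'. notval_tac.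
    + injection Heq; intros. destruct (IHF F' r r'); auto. subst; split; auto.
    + discriminate.
  - destruct F'; simpl in *; try discriminate.
    + exfalso. assert (EReset F = EHole) by (eapply redex_no_inner; [ | | | first [exact Heq | symmetry; exact Heq]]; eauto). discriminate.
    + injection Heq; intros. destruct (IHF F' r r'); auto. subst; split; auto.
Qed.

Lemma pure_shift_inj : forall E E' t t', is_pure E -> is_pure E' ->
  plugE E (Shift t) = plugE E' (Shift t') -> E = E' /\ t = t'.
Proof. induction E; intros E' s s' HE HE' Heq; destruct E'; simpl in *; try discriminate;
  try contradiction.
  - injection Heq; intros; subst; split; auto.
  - injection Heq; intros. destruct HE, HE'. destruct (IHE E' s s'); auto. subst; split; auto.
  - exfalso. injection Heq; intros. destruct HE. eapply pure_shift_notval. rewrite <- H0; eauto.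
  - exfalso. injection Heq; intros. destruct HE'. eapply pure_shift_notval. rewrite H0; eauto.
  - injection Heq; intros. destruct (IHE E' s s'); auto. subst; split; auto.
Qed.

Lemma step_inv : forall s s', step s s' -> exists F r r', is_eval F /\ redex r /\
  s = plugE F r /\ s' = plugE F r' /\
  ((exists t v, r = App (Lam t) v /\ r' = subst0 t v) \/
   (exists E t, is_pure E /\ r = Reset (plugE E (Shift t)) /\
       r' = Reset (subst0 t (Lam (Reset (plugE (liftE 0 E) (Var 0)))))) \/
   (exists v, is_value v /\ r = Reset v /\ r' = v)).
Proof. intros s s' H; destruct H.
  - exists F, (App (Lam t) v), (subst0 t v). split; [auto|split;[constructor; auto|]].
    split; [auto|split;[auto|]]. left; eauto.
  - exists F, (Reset (plugE E (Shift t))), (Reset (subst0 t (Lam (Reset (plugE (liftE 0 E) (Var 0)))))).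
    split; [auto|split;[constructor; auto|]].
    split; [auto|split;[auto|]]. right; left; eauto 7.
  - exists F, (Reset v), v. split; [auto|split;[constructor; auto|]].
    split; [auto|split;[auto|]]. right; right; eauto.
Qed.

Lemma step_det : forall s a b, step s a -> step s b -> a = b.
Proof. intros s a b Ha Hb.
  destruct (step_inv _ _ Ha) as [F [r [r' [HF [Hr [Hs [Ha' Hc]]]]]]].
  destruct (step_inv _ _ Hb) as [G [q [q' [HG [Hq [Hs2 [Hb' Hc2]]]]]]].
  subst. destruct (decomp_unique F G r q) as [? ?]; auto. subst. f_equal.
  destruct Hc as [[t [v [? ?]]]|[[E [t [? [? ?]]]]|[v [? [? ?]]]]];
  destruct Hc2 as [[t' [v' [? ?]]]|[[E' [t' [? [? ?]]]]|[v' [? [? ?]]]]]; subst; try discriminate.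
  all: match goal with
  | H : App _ _ = App _ _ |- _ => injection H; intros; subst; reflexivity
  | H : Reset (plugE ?E (Shift ?t)) = Reset (plugE ?E' (Shift ?t')) |- _ =>
      injection H; intros Hx; destruct (pure_shift_inj E E' t t'); auto; subst; reflexivity
  | H : Reset (plugE ?E (Shift ?t)) = Reset ?v |- _ =>
      injection H; intros Hx; exfalso; eapply pure_shift_notval; rewrite Hx; eauto
  | H : Reset ?v = Reset (plugE ?E (Shift ?t)) |- _ =>
      injection H; intros Hx; exfalso; eapply pure_shift_notval; rewrite <- Hx; eauto
  | H : Reset _ = Reset _ |- _ => injection H; intros; subst; reflexivity
  end.
Qed.

Lemma no_step_value : forall v x, is_value v -> ~ step v x.
Proof. intros v x Hv Hs. destruct (step_inv _ _ Hs) as [F [r [r' [HF [Hr [Hs' _]]]]]].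
  subst. eapply plug_redex_notval; eauto. Qed.

Lemma no_step_pure_shift : forall E t x, is_pure E -> ~ step (plugE E (Shift t)) x.
Proof. intros E t x HE Hs. destruct (step_inv _ _ Hs) as [F [r [r' [HF [Hr [Hs' _]]]]]].
  eapply pure_shift_not_plug; eauto. Qed.

Lemma steps_det_nf : forall s a n, steps s a -> steps s n -> (forall x, ~ step n x) -> steps a n.
Proof. intros s a n H; revert n; induction H; intros n Hn Hirr; auto.
  inversion Hn; subst. - exfalso; eapply Hirr; eauto.
  - assert (t' = t'0) by (eapply step_det; eauto). subst. auto. Qed.

Lemma steps_trans : forall a b c, steps a b -> steps b c -> steps a c.
Proof. intros a b c H; induction H; intros; auto. econstructor; eauto. Qed.

Lemma steps_one : forall a b, step a b -> steps a b.
Proof. intros; econstructor; eauto; constructor. Qed.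

Lemma step_ctx : forall F a b, is_eval F -> step a b -> step (plugE F a) (plugE F b).
Proof. intros F a b HF H; inversion H; subst; rewrite <- !plugE_comp;
  constructor; auto; apply is_eval_comp; auto. Qed.

Lemma steps_ctx : forall F a b, is_eval F -> steps a b -> steps (plugE F a) (plugE F b).
Proof. intros F a b HF H; induction H. constructor. econstructor; eauto using step_ctx. Qed.

Lemma step_closed : forall s s', closed s -> step s s' -> closed s'.
Proof. intros s s' Hc H. unfold closed in *. inversion H; subst;
  apply wf_plugE in Hc; destruct Hc as [HF Hr]; apply wf_plugE; split; auto; simpl in *.
  - destruct Hr; apply closed_subst0; auto.
  - apply wf_plugE in Hr; destruct Hr as [HE Ht]. simpl in Ht.
    apply closed_subst0; auto. unfold closed; simpl.
    rewrite (liftE_wf_id E 0) by (auto; lia). apply wf_plugE; split.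
    eapply wfE_weak; eauto. simpl; lia.
Qed.

Lemma steps_closed : forall s s', closed s -> steps s s' -> closed s'.
Proof. intros s s' Hc H; induction H; eauto using step_closed. Qed.

Lemma stuck_pure_shift : forall E t, is_pure E -> stuck (plugE E (Shift t)).
Proof. intros; split. apply pure_shift_notval. intros x; apply no_step_pure_shift; auto. Qed.

Lemma trich : forall u, is_value u \/ (exists u', step u u') \/ stuck u.
Proof. intros u. destruct (classic (is_value u)); auto. destruct (classic (exists u', step u u')); auto.
  right; right. split; auto. intros t' Hs; apply H0; eauto. Qed.

Lemma stuck_shape : forall t, closed t -> stuck t -> exists E s, is_pure E /\ t = plugE E (Shift s).
Proof. unfold closed. induction t; intros Hc [Hnv Hns]; simpl in *.
  - lia.
  - contradiction.
  - destruct Hc as [H1 H2]. destruct (trich t1) as [Hv|[[u' Hs]|Hst]].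
    + destruct (trich t2) as [Hv2|[[u' Hs]|Hst]].
      * destruct t1; simpl in Hv; try contradiction. exfalso; eapply Hns.
        apply (step_beta EHole); simpl; auto.
      * exfalso; eapply Hns. apply (step_ctx (EAppR t1 EHole)); simpl; eauto.
      * destruct (IHt2 H2 Hst) as [E [s [HE ->]]]. exists (EAppR t1 E), s; simpl; auto.
    + exfalso; eapply Hns. apply (step_ctx (EAppL EHole t2)); simpl; eauto.
    + destruct (IHt1 H1 Hst) as [E [s [HE ->]]]. exists (EAppL E t2), s; simpl; auto.
  - exists EHole, t; simpl; auto.
  - exfalso. destruct (trich t) as [Hv|[[u' Hs]|Hst]].
    + eapply Hns. apply (step_reset EHole); simpl; auto.
    + eapply Hns. apply (step_ctx (EReset EHole)); simpl; eauto.
    + destruct (IHt Hc Hst) as [E [s [HE ->]]]. eapply Hns.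
      apply (step_shift EHole); simpl; auto.
Qed.
CoInductive sim : term -> term -> Prop :=
| sim_c : forall s0 s1,
  (forall b0, steps s0 (Lam b0) -> exists b1, steps s1 (Lam b1) /\
     (forall v, closed v -> is_value v -> sim (subst0 b0 v) (subst0 b1 v))) ->
  (forall E0 t0, is_pure E0 -> steps s0 (plugE E0 (Shift t0)) ->
     exists E1 t1, is_pure E1 /\ steps s1 (plugE E1 (Shift t1)) /\
     (forall G, is_pure G -> wfE 0 G ->
        sim (Reset (subst0 t0 (kont G E0))) (Reset (subst0 t1 (kont G E1))))) ->
  sim s0 s1.

Definition simV (R : rel) s0 s1 :=
  forall b0, steps s0 (Lam b0) -> exists b1, steps s1 (Lam b1) /\
     (forall v, closed v -> is_value v -> R (subst0 b0 v) (subst0 b1 v)).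
Definition simS (R : rel) s0 s1 :=
  forall E0 t0, is_pure E0 -> steps s0 (plugE E0 (Shift t0)) ->
     exists E1 t1, is_pure E1 /\ steps s1 (plugE E1 (Shift t1)) /\
     (forall G, is_pure G -> wfE 0 G ->
        R (Reset (subst0 t0 (kont G E0))) (Reset (subst0 t1 (kont G E1)))).

Lemma sim_coind : forall R : rel,
  (forall s0 s1, R s0 s1 -> simV R s0 s1 /\ simS R s0 s1) ->
  forall s0 s1, R s0 s1 -> sim s0 s1.
Proof. intros R HR. cofix CIH. intros s0 s1 H. destruct (HR _ _ H) as [H1 H2]. constructor.
  - intros b0 Hs. destruct (H1 b0 Hs) as [b1 [Hs1 Hb]]. exists b1; split; auto.
  - intros E0 t0 HE Hs. destruct (H2 E0 t0 HE Hs) as [E1 [t1 [HE1 [Hs1 HG]]]].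
    exists E1, t1; split; auto.
Qed.

Lemma sim_inv : forall s0 s1, sim s0 s1 -> simV sim s0 s1 /\ simS sim s0 s1.
Proof. intros s0 s1 H; destruct H; split; auto. Qed.

Lemma sim_refl : forall t, sim t t.
Proof. intros t. apply (sim_coind (fun a b => a = b)); auto. intros s0 s1 ->. split.
  - intros b0 H. exists b0; split; auto.
  - intros E0 t0 HE H. exists E0, t0; split; auto.
Qed.

Lemma sim_trans : forall a b c, sim a b -> sim b c -> sim a c.
Proof. intros a b c H1 H2.
  apply (sim_coind (fun a c => exists b, sim a b /\ sim b c)); eauto.
  clear. intros a c [b [H1 H2]]. apply sim_inv in H1; apply sim_inv in H2.
  destruct H1 as [V1 S1], H2 as [V2 S2]. split.
  - intros b0 Hs. destruct (V1 b0 Hs) as [b1 [Hs1 Hb1]]. destruct (V2 b1 Hs1) as [b2 [Hs2 Hb2]].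
    exists b2; split; eauto.
  - intros E0 t0 HE Hs. destruct (S1 E0 t0 HE Hs) as [E1 [t1 [HE1 [Hs1 HG1]]]].
    destruct (S2 E1 t1 HE1 Hs1) as [E2 [t2 [HE2 [Hs2 HG2]]]].
    exists E2, t2; split; [auto|split; [auto|]]. intros; eauto.
Qed.

Lemma sim_stepsL : forall a a' b, sim a b -> steps a a' -> sim a' b.
Proof. intros a a' b H Hs. apply sim_inv in H; destruct H as [V S]. constructor.
  - intros b0 H. apply V. eapply steps_trans; eauto.
  - intros E0 t0 HE H. apply S; auto. eapply steps_trans; eauto.
Qed.

Lemma sim_stepsR : forall a b b', sim a b -> steps b b' -> sim a b'.
Proof. intros a b b' H Hs. apply sim_inv in H; destruct H as [V S]. constructor.
  - intros b0 H. destruct (V b0 H) as [b1 [Hs1 Hb]]. exists b1; split; auto.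
    eapply steps_det_nf; eauto. intros x; apply no_step_value; simpl; auto.
  - intros E0 t0 HE H. destruct (S E0 t0 HE H) as [E1 [t1 [HE1 [Hs1 HG]]]].
    exists E1, t1; split; [auto|split;[|auto]].
    eapply steps_det_nf; eauto. intros x; apply no_step_pure_shift; auto.
Qed.
Definition cval (v : term) : Prop := closed v /\ is_value v.

Definition osim (k : nat) (t u : term) : Prop :=
  wf k t /\ wf k u /\ forall vs, k <= length vs -> Forall cval vs -> sim (msubst vs t) (msubst vs u).

Inductive How : nat -> term -> term -> Prop :=
| H_var : forall k n u, osim k (Var n) u -> How k (Var n) u
| H_lam : forall k a a' u, How (S k) a a' -> osim k (Lam a') u -> How k (Lam a) u
| H_app : forall k a a' c c' u, How k a a' -> How k c c' -> osim k (App a' c') u -> How k (App a c) u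
| H_shift : forall k a a' u, How (S k) a a' -> osim k (Shift a') u -> How k (Shift a) u
| H_reset : forall k a a' u, How k a a' -> osim k (Reset a') u -> How k (Reset a) u.

Lemma osim_refl : forall k t, wf k t -> osim k t t.
Proof. intros; split; [auto|split;[auto|]]. intros; apply sim_refl. Qed.

Lemma osim_trans : forall k a b c, osim k a b -> osim k b c -> osim k a c.
Proof. intros k a b c [Xa [Xb H1]] [Ya [Yb H2]]. split; [auto|split;[auto|]]. intros; eapply sim_trans; eauto. Qed.

Lemma osim_weak : forall k t u, osim k t u -> osim (S k) t u.
Proof. intros k t u [Xa [Xb H1]]. split; [eapply wf_weak; eauto|split;[eapply wf_weak; eauto|]].
  intros; apply H1; auto; lia. Qed.

Lemma osim_wf : forall k t u, osim k t u -> wf k t /\ wf k u.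
Proof. intros k t u [? [? _]]; auto. Qed.

Lemma osim0_sim : forall t u, osim 0 t u -> sim t u.
Proof. intros t u [_ [_ H1]]. apply (H1 nil); simpl; auto. Qed.

Lemma sim_osim0 : forall t u, closed t -> closed u -> sim t u -> osim 0 t u.
Proof. intros; split; [auto|split;[auto|]]. intros. rewrite !msubst_closed; auto. Qed.

Lemma sim_osim : forall k t u, closed t -> closed u -> sim t u -> osim k t u.
Proof. intros; split; [eapply wf_weak; eauto; lia|split;[eapply wf_weak; eauto; lia|]].
  intros. rewrite !msubst_closed; auto. Qed.

Lemma Forall_cval_closed : forall vs, Forall cval vs -> Forall closed vs.
Proof. intros vs Hf; induction Hf as [|x l Hx Hl IH]; constructor; auto. destruct Hx; auto. Qed.

Lemma osim_subst : forall k t u j v, osim (S k) t u -> cval v -> j <= k ->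
  osim k (subst j v t) (subst j v u).
Proof. intros k t u j v [Ht [Hu H1]] [Hcv Hvv] Hj. split; [apply wf_subst; auto|split;[apply wf_subst; auto|]].
  intros vs Hl Hvs. rewrite !msubst_ins; auto using Forall_cval_closed; try lia.
  apply H1. rewrite length_ins; lia. apply Forall_ins; auto. split; auto. Qed.

Lemma H_wf : forall k t u, How k t u -> wf k t /\ wf k u.
Proof. intros k t u Hh; induction Hh; simpl;
  repeat match goal with Ho : osim _ _ _ |- _ => apply osim_wf in Ho end; intuition. Qed.

Lemma H_osim : forall k t u w, How k t u -> osim k u w -> How k t w.
Proof. intros k t u w Hh Ho; destruct Hh; econstructor; eauto using osim_trans. Qed.

Lemma H_refl : forall t k, wf k t -> How k t t.
Proof. induction t; simpl; intros k Hw.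
  - constructor; apply osim_refl; simpl; auto.
  - econstructor; eauto. apply osim_refl; simpl; auto.
  - destruct Hw; econstructor; eauto. apply osim_refl; simpl; auto.
  - econstructor; eauto. apply osim_refl; simpl; auto.
  - econstructor; eauto. apply osim_refl; simpl; auto.
Qed.

Lemma osim_H : forall k t u, osim k t u -> How k t u.
Proof. intros k t u Ho. pose proof (osim_wf _ _ _ Ho) as [Hw _].
  destruct t; simpl in Hw.
  - constructor; auto.
  - econstructor; [apply H_refl; eauto|auto].
  - destruct Hw; econstructor; [apply H_refl; eauto|apply H_refl; eauto|auto].
  - econstructor; [apply H_refl; eauto|auto].
  - econstructor; [apply H_refl; eauto|auto].
Qed.

Lemma H_weak : forall k t u, How k t u -> How (S k) t u.
Proof. intros k t u Hh; induction Hh; econstructor; eauto using osim_weak. Qed.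

Lemma H_weak0 : forall k t u, How 0 t u -> How k t u.
Proof. induction k; intros; auto. apply H_weak; auto. Qed.

Lemma H_lam_c : forall k a a', How (S k) a a' -> How k (Lam a) (Lam a').
Proof. intros k a a' Ha. econstructor; eauto. apply osim_refl. simpl. apply (H_wf _ _ _ Ha). Qed.
Lemma H_app_c : forall k a a' c c', How k a a' -> How k c c' -> How k (App a c) (App a' c').
Proof. intros k a a' c c' Ha Hc. econstructor; eauto. apply osim_refl. simpl. split; [apply (H_wf _ _ _ Ha)|apply (H_wf _ _ _ Hc)]. Qed.
Lemma H_shift_c : forall k a a', How (S k) a a' -> How k (Shift a) (Shift a').
Proof. intros k a a' Ha. econstructor; eauto. apply osim_refl. simpl. apply (H_wf _ _ _ Ha). Qed.
Lemma H_reset_c : forall k a a', How k a a' -> How k (Reset a) (Reset a').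
Proof. intros k a a' Ha. econstructor; eauto. apply osim_refl. simpl. apply (H_wf _ _ _ Ha). Qed.

Lemma H_subst : forall m t t', How m t t' -> forall k j v v', m = S k -> How 0 v v' -> cval v -> cval v' -> j <= k ->
  How k (subst j v t) (subst j v' t').
Proof. intros m t t' Hh; induction Hh as [k n u Ho | k a a' u Hh IH Ho | k a a' c c' u Hh1 IH1 Hh2 IH2 Ho
    | k a a' u Hh IH Ho | k a a' u Hh IH Ho];
  intros k' j v v' Hm Hv Hcv Hcv' Hj; subst k; simpl;
  pose proof (osim_subst _ _ _ j v' Ho Hcv' Hj) as Ho'; simpl in Ho';
  try rewrite (lift_closed v) by (destruct Hcv; auto);
  try rewrite (lift_closed v') in Ho' by (destruct Hcv'; auto).
  - destruct (Nat.eqb_spec n j).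
    + eapply H_osim. apply H_weak0; eauto. exact Ho'.
    + destruct (n <? j); constructor; auto.
  - apply H_lam with (a' := subst (S j) v' a'); [apply IH; auto; lia|exact Ho'].
  - apply H_app with (a' := subst j v' a') (c' := subst j v' c'); [apply IH1; auto|apply IH2; auto|exact Ho'].
  - apply H_shift with (a' := subst (S j) v' a'); [apply IH; auto; lia|exact Ho'].
  - apply H_reset with (a' := subst j v' a'); [apply IH; auto|exact Ho'].
Qed.

Lemma H_subst0 : forall t t' v v', How 1 t t' -> How 0 v v' -> cval v -> cval v' ->
  How 0 (subst0 t v) (subst0 t' v').
Proof. intros. eapply H_subst; eauto. Qed.
Lemma How_inv_lam : forall k a u, How k (Lam a) u -> exists a', How (S k) a a' /\ osim k (Lam a') u.
Proof. intros k a u Hh; inversion Hh; subst; eauto. Qed.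
Lemma How_inv_shift : forall k a u, How k (Shift a) u -> exists a', How (S k) a a' /\ osim k (Shift a') u.
Proof. intros k a u Hh; inversion Hh; subst; eauto. Qed.
Lemma How_inv_reset : forall k a u, How k (Reset a) u -> exists a', How k a a' /\ osim k (Reset a') u.
Proof. intros k a u Hh; inversion Hh; subst; eauto. Qed.
Lemma How_inv_app : forall k a c u, How k (App a c) u ->
  exists a' c', How k a a' /\ How k c c' /\ osim k (App a' c') u.
Proof. intros k a c u Hh; inversion Hh; subst; eauto 6. Qed.
Inductive hatH : ectx -> ectx -> Prop :=
| hH_hole : hatH EHole EHole
| hH_appR : forall v v' G G', is_value v -> is_value v' -> How 0 v v' -> hatH G G' ->
    hatH (EAppR v G) (EAppR v' G')
| hH_appL : forall G G' u u', hatH G G' -> How 0 u u' -> hatH (EAppL G u) (EAppL G' u').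

Lemma hatH_props : forall G G', hatH G G' -> is_pure G /\ is_pure G' /\ wfE 0 G /\ wfE 0 G'.
Proof. intros G G' Hh; induction Hh; simpl; auto;
  match goal with Hx : How 0 _ _ |- _ => apply H_wf in Hx end; intuition. Qed.

Lemma hatH_refl : forall G, is_pure G -> wfE 0 G -> hatH G G.
Proof. induction G; simpl; intros; intuition.
  - constructor.
  - constructor; auto. apply H_refl; auto.
  - constructor; auto. apply H_refl; auto.
Qed.

Lemma hatH_comp : forall A A' B B', hatH A A' -> hatH B B' -> hatH (compE A B) (compE A' B').
Proof. intros A A' B B' Ha Hb; induction Ha; simpl; auto; constructor; auto. Qed.

Lemma hatH_plug : forall G G' k a a', hatH G G' -> How k a a' -> How k (plugE G a) (plugE G' a').
Proof. intros G G' k a a' Hh Ha; induction Hh; simpl; auto.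
  - apply H_app_c; auto. apply H_weak0; auto.
  - apply H_app_c; auto. apply H_weak0; auto.
Qed.

Lemma How_kont : forall G G' E E', hatH G G' -> hatH E E' -> How 0 (kont G E) (kont G' E').
Proof. intros G G' E E' HG HE. pose proof (hatH_props _ _ HG) as [? [? [? ?]]].
  pose proof (hatH_props _ _ HE) as [? [? [? ?]]]. unfold kont.
  rewrite !(liftE_wf_id _ 0 0) by (auto; lia).
  apply H_lam_c. apply H_reset_c. apply hatH_plug; auto. apply hatH_plug; auto.
  apply H_refl. simpl; lia.
Qed.

Lemma kont_cval : forall G E, wfE 0 G -> wfE 0 E -> cval (kont G E).
Proof. intros; split. apply kont_closed; auto. simpl; auto. Qed.

Lemma closed_plug_inv : forall F t, closed (plugE F t) -> wfE 0 F /\ closed t.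
Proof. intros F t Hc. apply wf_plugE in Hc; auto. Qed.

Lemma closed_reset_kont : forall t G E, wf 1 t -> wfE 0 G -> wfE 0 E ->
  closed (Reset (subst0 t (kont G E))).
Proof. intros. unfold closed; simpl. apply closed_subst0; auto. apply kont_closed; auto. Qed.

Lemma SK : forall E t b, is_pure E -> closed (plugE E (Shift t)) -> How 0 (plugE E (Shift t)) b ->
  exists E1 t1, is_pure E1 /\ steps b (plugE E1 (Shift t1)) /\
   forall G G', hatH G G' -> How 0 (Reset (subst0 t (kont G E))) (Reset (subst0 t1 (kont G' E1))).
Proof. induction E; intros s b HE Hc Hh; simpl in *.
  - destruct (How_inv_shift _ _ _ Hh) as [s' [Hss Ho]].
    pose proof (osim_wf _ _ _ Ho) as [Hw1 Hw2].
    apply osim0_sim in Ho. apply sim_inv in Ho. destruct Ho as [_ Sc].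
    destruct (Sc EHole s' I (steps_refl _)) as [E1 [t1 [HE1 [Hs1 HG]]]].
    exists E1, t1; split; [auto|split;[auto|]].
    pose proof (closed_plug_inv _ _ (steps_closed _ _ Hw2 Hs1)) as [HwE1 Hwt1].
    intros G G' HGG. pose proof (hatH_props _ _ HGG) as [? [? [? ?]]].
    eapply H_osim. apply H_reset_c. apply H_subst0. exact Hss.
    apply (How_kont G G' EHole EHole); auto; constructor.
    apply kont_cval; simpl; auto. apply kont_cval; simpl; auto.
    apply sim_osim0. apply closed_reset_kont; simpl; auto.
    apply closed_reset_kont; simpl; auto.
    apply HG; auto.
  - destruct HE as [Hv HE]. destruct (How_inv_app _ _ _ _ Hh) as [a' [c' [Hv1 [Hh2 Ho]]]].
    unfold closed in Hc; simpl in Hc. destruct Hc as [Hct Hcs].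
    destruct t as [| p | | |]; simpl in Hv; try contradiction.
    destruct (How_inv_lam _ _ _ Hv1) as [p1 [Hp Hop]].
    pose proof (osim_wf _ _ _ Hop) as [Hwp1 Hwx1].
    apply osim0_sim in Hop. pose proof (sim_inv _ _ Hop) as [Vp _].
    destruct (Vp p1 (steps_refl _)) as [q [Hsq _]].
    assert (Hcq : closed (Lam q)) by (eapply steps_closed; eauto).
    assert (Hpq : How 0 (Lam p) (Lam q)).
    { econstructor; eauto. apply sim_osim0; auto. eapply sim_stepsR; eauto. }
    destruct (IHE s c' HE) as [E2 [t2 [HE2 [Hs2 HG2]]]]; auto.
    pose proof (osim_wf _ _ _ Ho) as [Hwa Hwb]. simpl in Hwa. destruct Hwa as [Hwx1' Hwc'].
    apply osim0_sim in Ho.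
    assert (Hst : steps (App a' c') (plugE (EAppR (Lam q) E2) (Shift t2))).
    { eapply steps_trans. apply (steps_ctx (EAppL EHole c')); simpl; eauto.
      apply (steps_ctx (EAppR (Lam q) EHole)); simpl; eauto. }
    pose proof (sim_stepsL _ _ _ Ho Hst) as Ho2. apply sim_inv in Ho2. destruct Ho2 as [_ Sc].
    destruct (Sc (EAppR (Lam q) E2) t2) as [E3 [t3 [HE3 [Hs3 HG3]]]]; simpl; auto. constructor.
    exists E3, t3; split; [auto|split;[auto|]].
    assert (Hcb : closed b) by auto.
    pose proof (closed_plug_inv _ _ (steps_closed _ _ Hcb Hs3)) as [HwE3 Hwt3].
    pose proof (closed_plug_inv _ _ (steps_closed _ _ Hwc' Hs2)) as [HwE2 Hwt2].
    intros G G' HGG. pose proof (hatH_props _ _ HGG) as [? [? [? ?]]].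
    change (EAppR (Lam p) E) with (compE (EAppR (Lam p) EHole) E). rewrite kont_comp.
    eapply H_osim. apply (HG2 (compE G (EAppR (Lam p) EHole)) (compE G' (EAppR (Lam q) EHole))).
    apply hatH_comp; [exact HGG| constructor; simpl; auto; constructor].
    apply sim_osim0.
    + apply closed_reset_kont; auto. apply wfE_comp; simpl; auto.
    + apply closed_reset_kont; auto.
    + rewrite <- kont_comp. apply HG3; auto.
  - destruct (How_inv_app _ _ _ _ Hh) as [a' [c' [Hh1 [Hu Ho]]]].
    unfold closed in Hc; simpl in Hc. destruct Hc as [Hcs Hcu].
    destruct (IHE s a' HE) as [E2 [t2 [HE2 [Hs2 HG2]]]]; auto.
    pose proof (osim_wf _ _ _ Ho) as [Hwa Hwb]. simpl in Hwa. destruct Hwa as [Hwa' Hwc'].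
    apply osim0_sim in Ho.
    assert (Hst : steps (App a' c') (plugE (EAppL E2 c') (Shift t2))).
    { apply (steps_ctx (EAppL EHole c')); simpl; eauto. }
    pose proof (sim_stepsL _ _ _ Ho Hst) as Ho2. apply sim_inv in Ho2. destruct Ho2 as [_ Sc].
    destruct (Sc (EAppL E2 c') t2) as [E3 [t3 [HE3 [Hs3 HG3]]]]; simpl; auto. constructor.
    exists E3, t3; split; [auto|split;[auto|]].
    pose proof (closed_plug_inv _ _ (steps_closed _ _ Hwb Hs3)) as [HwE3 Hwt3].
    pose proof (closed_plug_inv _ _ (steps_closed _ _ Hwa' Hs2)) as [HwE2 Hwt2].
    intros G G' HGG. pose proof (hatH_props _ _ HGG) as [? [? [? ?]]].
    change (EAppL E t) with (compE (EAppL EHole t) E). rewrite kont_comp.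
    eapply H_osim. apply (HG2 (compE G (EAppL EHole t)) (compE G' (EAppL EHole c'))).
    apply hatH_comp; [exact HGG| constructor; auto; constructor].
    apply sim_osim0.
    + apply closed_reset_kont; auto. apply wfE_comp; simpl; auto.
    + apply closed_reset_kont; auto.
    + change (EAppL E2 c') with (compE (EAppL EHole c') E2) in HG3.
      rewrite <- kont_comp. apply HG3; auto; try (apply wfE_comp; simpl; auto).
  - contradiction.
Qed.
Lemma beta_top : forall t v b, is_value v -> closed (App (Lam t) v) -> How 0 (App (Lam t) v) b ->
  How 0 (subst0 t v) b.
Proof. intros t v b Hv Hc Hh. unfold closed in Hc; simpl in Hc; destruct Hc as [Hct Hcv].
  destruct (How_inv_app _ _ _ _ Hh) as [x' [y' [Hx [Hy Ho]]]].
  destruct (How_inv_lam _ _ _ Hx) as [p1 [Hp Hop]].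
  destruct v as [| r | | |]; simpl in Hv; try contradiction.
  destruct (How_inv_lam _ _ _ Hy) as [r1 [Hr Hor]].
  pose proof (osim_wf _ _ _ Hop) as [Hwp1 Hwx].
  pose proof (osim_wf _ _ _ Hor) as [Hwr1 Hwy].
  pose proof (osim_wf _ _ _ Ho) as [_ Hwb].
  apply osim0_sim in Hop, Hor, Ho.
  destruct (proj1 (sim_inv _ _ Hop) p1 (steps_refl _)) as [q [Hsq Hq]].
  destruct (proj1 (sim_inv _ _ Hor) r1 (steps_refl _)) as [w [Hsw _]].
  assert (Hcq : closed (Lam q)) by exact (steps_closed _ _ Hwx Hsq).
  assert (Hcw : closed (Lam w)) by exact (steps_closed _ _ Hwy Hsw).
  assert (Hrw : How 0 (Lam r) (Lam w)).
  { econstructor; eauto. apply sim_osim0; auto. eapply sim_stepsR; eauto. }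
  assert (Hs : How 0 (subst0 t (Lam r)) (subst0 p1 (Lam w))).
  { apply H_subst0; auto; split; simpl; auto. }
  eapply H_osim; [exact Hs|]. apply sim_osim0; auto.
  - apply closed_subst0; auto.
  - eapply sim_trans. apply Hq; simpl; auto.
    eapply sim_stepsL; [exact Ho|].
    eapply steps_trans. apply (steps_ctx (EAppL EHole y')); simpl; eauto.
    eapply steps_trans. apply (steps_ctx (EAppR (Lam q) EHole)); simpl; eauto.
    apply steps_one. apply (step_beta EHole); simpl; auto.
Qed.

Lemma reset_top : forall v b, is_value v -> closed (Reset v) -> How 0 (Reset v) b -> How 0 v b.
Proof. intros v b Hv Hc Hh.
  destruct (How_inv_reset _ _ _ Hh) as [x' [Hx Ho]].
  destruct v as [| p | | |]; simpl in Hv; try contradiction.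
  destruct (How_inv_lam _ _ _ Hx) as [p1 [Hp Hop]].
  pose proof (osim_wf _ _ _ Hop) as [Hwp1 Hwx].
  pose proof (osim_wf _ _ _ Ho) as [_ Hwb].
  apply osim0_sim in Hop, Ho.
  destruct (proj1 (sim_inv _ _ Hop) p1 (steps_refl _)) as [q [Hsq _]].
  assert (Hcq : closed (Lam q)) by exact (steps_closed _ _ Hwx Hsq).
  assert (Hpq : How 0 (Lam p) (Lam q)).
  { econstructor; eauto. apply sim_osim0; auto. eapply sim_stepsR; eauto. }
  eapply H_osim; [exact Hpq|]. apply sim_osim0; auto.
  eapply sim_stepsL; [exact Ho|].
  eapply steps_trans. apply (steps_ctx (EReset EHole)); simpl; eauto.
  apply steps_one. apply (step_reset EHole); simpl; auto.
Qed.

Lemma shift_top : forall E t b, is_pure E -> closed (Reset (plugE E (Shift t))) ->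
  How 0 (Reset (plugE E (Shift t))) b ->
  How 0 (Reset (subst0 t (Lam (Reset (plugE (liftE 0 E) (Var 0)))))) b.
Proof. intros E t b HE Hc Hh.
  destruct (How_inv_reset _ _ _ Hh) as [x' [Hx Ho]].
  pose proof (osim_wf _ _ _ Ho) as [Hwx Hwb]. simpl in Hwx.
  destruct (SK E t x' HE Hc Hx) as [E1 [t1 [HE1 [Hs1 HG]]]].
  pose proof (closed_plug_inv _ _ (steps_closed _ _ Hwx Hs1)) as [HwE1 Hwt1].
  pose proof (closed_plug_inv _ _ Hc) as [HwE Hwt].
  apply osim0_sim in Ho.
  eapply H_osim. apply (HG EHole EHole). constructor.
  apply sim_osim0.
  - apply closed_reset_kont; simpl; auto.
  - auto.
  - eapply sim_stepsL; [exact Ho|].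
    eapply steps_trans. apply (steps_ctx (EReset EHole)); simpl; eauto.
    apply steps_one. apply (step_shift EHole); simpl; auto.
Qed.

Lemma L_ctx : forall F r r', is_eval F ->
  (forall b, closed r -> How 0 r b -> How 0 r' b) ->
  closed (plugE F r) -> forall b, How 0 (plugE F r) b -> How 0 (plugE F r') b.
Proof. induction F; intros r r' HF Hr Hc b Hh; simpl in *; unfold closed in Hc; simpl in Hc.
  - apply Hr; auto.
  - destruct HF as [Hv HF]. destruct Hc as [Hc1 Hc2].
    destruct (How_inv_app _ _ _ _ Hh) as [a' [c' [Ha [Hc' Ho]]]].
    econstructor; [exact Ha| |exact Ho]. eapply IHF; eauto.
  - destruct Hc as [Hc1 Hc2].
    destruct (How_inv_app _ _ _ _ Hh) as [a' [c' [Ha [Hc' Ho]]]].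
    econstructor; [|exact Hc'|exact Ho]. eapply IHF; eauto.
  - destruct (How_inv_reset _ _ _ Hh) as [a' [Ha Ho]].
    econstructor; [|exact Ho]. eapply IHF; eauto.
Qed.

Lemma L_step : forall s s', step s s' -> closed s -> forall b, How 0 s b -> How 0 s' b.
Proof. intros s s' Hs. destruct Hs; intros Hc b Hh.
  - apply (L_ctx F (App (Lam t) v) (subst0 t v)); auto. intros b' Hc' Hh'; eapply beta_top; eauto.
  - apply (L_ctx F (Reset (plugE E (Shift t)))); auto. intros b' Hc' Hh'; eapply shift_top; eauto.
  - apply (L_ctx F (Reset v) v); auto. intros b' Hc' Hh'; eapply reset_top; eauto.
Qed.

Lemma L_steps : forall s s', steps s s' -> closed s -> forall b, How 0 s b -> How 0 s' b.
Proof. intros s s' Hs; induction Hs; intros Hc b Hh; auto.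
  apply IHHs. eapply step_closed; eauto. eapply L_step; eauto. Qed.

Lemma How_sim : forall s b, closed s -> How 0 s b -> sim s b.
Proof. intros s b Hc Hh. apply (sim_coind (fun s b => closed s /\ How 0 s b)); auto.
  clear. intros s b [Hc Hh]. split.
  - intros b0 Hs. pose proof (L_steps _ _ Hs Hc _ Hh) as Hl.
    assert (Hcl : closed (Lam b0)) by exact (steps_closed _ _ Hc Hs).
    destruct (How_inv_lam _ _ _ Hl) as [p1 [Hp Hop]].
    pose proof (osim_wf _ _ _ Hop) as [Hwp1 Hwb].
    apply osim0_sim in Hop.
    destruct (proj1 (sim_inv _ _ Hop) p1 (steps_refl _)) as [q [Hsq Hq]].
    assert (Hcq : closed (Lam q)) by exact (steps_closed _ _ Hwb Hsq).
    exists q; split; auto. intros v Hcv Hv. split. apply closed_subst0; auto.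
    eapply H_osim. apply H_subst0; eauto. apply H_refl; auto. split; auto. split; auto.
    apply sim_osim0. apply closed_subst0; auto. apply closed_subst0; auto. apply Hq; auto.
  - intros E0 t0 HE Hs. pose proof (L_steps _ _ Hs Hc _ Hh) as Hl.
    assert (Hcl : closed (plugE E0 (Shift t0))) by exact (steps_closed _ _ Hc Hs).
    destruct (SK E0 t0 b HE Hcl Hl) as [E1 [t1 [HE1 [Hs1 HG]]]].
    pose proof (closed_plug_inv _ _ Hcl) as [HwE Hwt].
    exists E1, t1; split; [auto|split;[auto|]]. intros G HG1 HG2. split.
    + apply closed_reset_kont; auto.
    + apply HG. apply hatH_refl; auto.
Qed.

Lemma tilde_How : forall (R : rel), (forall a b, R a b -> closed a /\ closed b /\ sim a b) ->
  forall a b, tildeI R a b -> forall k, wf k a -> wf k b -> How k a b.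
Proof. intros R HR a b Ht; induction Ht as [a b Hab| | | | |]; intros k Ha Hb; simpl in *.
  - destruct (HR a b Hab) as [? [? ?]]. apply osim_H. apply sim_osim; auto.
  - apply H_refl; simpl; auto.
  - apply H_lam_c; auto.
  - destruct Ha, Hb. apply H_app_c; auto.
  - apply H_shift_c; auto.
  - apply H_reset_c; auto.
Qed.

Lemma tilde_sim : forall (R : rel), (forall a b, R a b -> closed a /\ closed b /\ sim a b) ->
  forall a b, tildeI R a b -> closed a -> closed b -> sim a b.
Proof. intros. apply How_sim; auto. eapply tilde_How; eauto. Qed.
Lemma hat_refl : forall R G, is_pure G -> wfE 0 G -> hat R G G.
Proof. induction G; simpl; intros; intuition.
  - constructor.
  - constructor; auto. split; [apply tildeI_refl|split; auto].
  - constructor; auto. split; [apply tildeI_refl|split; auto].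
Qed.

Lemma bisim_steps : forall X E s0 s1 r, env_bisim X -> trip X E s0 s1 -> steps s0 r ->
  exists r1, steps s1 r1 /\ trip X E r r1.
Proof. intros X E s0 s1 r HX Ht Hs; revert s1 Ht; induction Hs as [|x y z Hxy Hs IHHs]; intros s1 Ht.
  - exists s1; split; auto. constructor.
  - destruct HX as [_ [Tcl _]]. destruct (Tcl _ _ _ Ht) as [T1 _].
    destruct (T1 _ Hxy) as [m [Hm Htm]]. destruct (IHHs _ Htm) as [r1 [Hr1 Htr]].
    exists r1; split; auto. eapply steps_trans; eauto.
Qed.

Lemma bisim_stepsR : forall X E s0 s1 r, env_bisim X -> trip X E s0 s1 -> steps s1 r ->
  exists r0, steps s0 r0 /\ trip X E r0 r.
Proof. intros X E s0 s1 r HX Ht Hs; revert s0 Ht; induction Hs as [|x y z Hxy Hs IHHs]; intros s0 Ht.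
  - exists s0; split; auto. constructor.
  - destruct HX as [_ [Tcl _]]. destruct (Tcl _ _ _ Ht) as [_ [_ [_ [T1 _]]]].
    destruct (T1 _ Hxy) as [m [Hm Htm]]. destruct (IHHs _ Htm) as [r1 [Hr1 Htr]].
    exists r1; split; auto. eapply steps_trans; eauto.
Qed.

Lemma approx_sim : forall X E s0 s1, env_bisim X -> trip X E s0 s1 -> sim s0 s1.
Proof. intros X E s0 s1 HX Ht.
  apply (sim_coind (fun s0 s1 => exists X E, env_bisim X /\ trip X E s0 s1)); eauto.
  clear. intros s0 s1 [X [E [HX Ht]]].
  pose proof HX as [[Wenv Wtrip] [Tcl Ecl]]. split.
  - intros b0 Hs. destruct (bisim_steps _ _ _ _ _ HX Ht Hs) as [r1 [Hr1 Htr]].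
    destruct (Tcl _ _ _ Htr) as [_ [T2 _]].
    destruct (T2 I) as [v1 [Hv1 [Hvv Henv]]].
    destruct v1 as [| b1 | | |]; simpl in Hvv; try contradiction.
    exists b1; split. eapply steps_trans; eauto.
    intros v Hcv Hv. exists X, (add_pair E (Lam b0) (Lam b1)); split; auto.
    destruct (Ecl _ Henv) as [E2a _]. apply E2a; auto.
    + right; split; reflexivity.
    + split; [apply tildeI_refl|split; auto].
  - intros E0 t0 HE Hs. destruct (bisim_steps _ _ _ _ _ HX Ht Hs) as [r1 [Hr1 Htr]].
    destruct (Tcl _ _ _ Htr) as [_ [_ [T3 _]]].
    destruct (T3 (stuck_pure_shift _ _ HE)) as [t1' [Ht1' [Hst Henv]]].
    assert (Hc1 : closed t1').
    { destruct (Wenv _ Henv _ _ (or_intror (conj eq_refl eq_refl))) as [_ [? _]]; auto. }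
    destruct (stuck_shape _ Hc1 Hst) as [E1 [t1 [HE1 ->]]].
    exists E1, t1; split; [auto|split;[eapply steps_trans; eauto|]].
    intros G HG HwG. exists X, (add_pair E (plugE E0 (Shift t0)) (plugE E1 (Shift t1))); split; auto.
    destruct (Ecl _ Henv) as [_ E2b]. unfold kont. apply E2b; auto.
    + right; split; reflexivity.
    + apply hat_refl; auto.
Qed.

Lemma approx_sim_sym : forall X E s0 s1, env_bisim X -> trip X E s0 s1 -> sim s1 s0.
Proof. intros X E s0 s1 HX Ht.
  apply (sim_coind (fun s1 s0 => exists X E, env_bisim X /\ trip X E s0 s1)); eauto.
  clear. intros s1 s0 [X [E [HX Ht]]].
  pose proof HX as [[Wenv Wtrip] [Tcl Ecl]]. split.
  - intros b1 Hs. destruct (bisim_stepsR _ _ _ _ _ HX Ht Hs) as [r0 [Hr0 Htr]].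
    destruct (Tcl _ _ _ Htr) as [_ [_ [_ [_ [T2 _]]]]].
    destruct (T2 I) as [v0 [Hv0 [Hvv Henv]]].
    destruct v0 as [| b0 | | |]; simpl in Hvv; try contradiction.
    exists b0; split. eapply steps_trans; eauto.
    intros v Hcv Hv. exists X, (add_pair E (Lam b0) (Lam b1)); split; auto.
    destruct (Ecl _ Henv) as [E2a _]. apply E2a; auto.
    + right; split; reflexivity.
    + split; [apply tildeI_refl|split; auto].
  - intros E1 t1 HE Hs. destruct (bisim_stepsR _ _ _ _ _ HX Ht Hs) as [r0 [Hr0 Htr]].
    destruct (Tcl _ _ _ Htr) as [_ [_ [_ [_ [_ T3]]]]].
    destruct (T3 (stuck_pure_shift _ _ HE)) as [t0' [Ht0' [Hst Henv]]].
    assert (Hc0 : closed t0').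
    { destruct (Wenv _ Henv _ _ (or_intror (conj eq_refl eq_refl))) as [? _]; auto. }
    destruct (stuck_shape _ Hc0 Hst) as [E0 [t0 [HE0 ->]]].
    exists E0, t0; split; [auto|split;[eapply steps_trans; eauto|]].
    intros G HG HwG. exists X, (add_pair E (plugE E0 (Shift t0)) (plugE E1 (Shift t1))); split; auto.
    destruct (Ecl _ Henv) as [_ E2b]. unfold kont. apply E2b; auto.
    + right; split; reflexivity.
    + apply hat_refl; auto.
Qed.
Definition simeq (a b : term) : Prop := sim a b /\ sim b a.

Lemma tildeI_flip : forall (R : rel) a b, tildeI R a b -> tildeI (fun x y => R y x) b a.
Proof. intros R a b Ht; induction Ht; [apply ti_base|apply ti_var|apply ti_lam|apply ti_app|apply ti_shift|apply ti_reset]; auto. Qed.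

Lemma tilde_simeq : forall (R : rel), (forall a b, R a b -> closed a /\ closed b /\ simeq a b) ->
  forall a b, tildeI R a b -> closed a -> closed b -> simeq a b.
Proof. intros R HR a b Ht Ha Hb. split.
  - apply (tilde_sim R); auto. intros x y Hxy. destruct (HR x y Hxy) as [? [? [? ?]]]; auto.
  - apply (tilde_sim (fun x y => R y x)); auto. intros x y Hxy. destruct (HR y x Hxy) as [? [? [? ?]]]; auto.
    apply tildeI_flip; auto.
Qed.

Lemma hat_plug_tildeI : forall R F0 F1 a b, hat R F0 F1 -> tildeI R a b ->
  tildeI R (plugE F0 a) (plugE F1 b).
Proof. intros R F0 F1 a b Hh Ht; induction Hh; simpl; auto;
  repeat match goal with Hx : tilde _ _ _ |- _ => destruct Hx as [? [? ?]] end.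
  - apply ti_app; auto.
  - apply ti_app; auto.
  - apply ti_reset; auto.
Qed.

Lemma hat_wf : forall R F0 F1, hat R F0 F1 -> wfE 0 F0 /\ wfE 0 F1.
Proof. intros R F0 F1 Hh; induction Hh; simpl;
  repeat match goal with Hx : tilde _ _ _ |- _ => destruct Hx as [_ [? ?]] end; intuition. Qed.

Lemma shift_step2 : forall A B s, is_pure A -> is_pure B ->
  step (Reset (plugE A (plugE B (Shift s))))
       (Reset (subst0 s (Lam (Reset (plugE (liftE 0 A) (plugE (liftE 0 B) (Var 0))))))).
Proof. intros A B s HA HB.
  pose proof (step_shift EHole (compE A B) s I (is_pure_comp _ _ HA HB)) as Hs. simpl in Hs.
  rewrite !liftE_comp, !plugE_comp in Hs. exact Hs. Qed.

Lemma stuck_steps_value : forall a b, stuck a -> steps a b -> ~ is_value b.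
Proof. intros a b [Hnv Hns] Hs. inversion Hs; subst; auto. exfalso; eapply Hns; eauto. Qed.

Definition envsX (E : rel) : Prop := is_env E /\ forall a b, E a b -> simeq a b.
Definition tripX (E : rel) (s0 s1 : term) : Prop := envsX E /\ closed s0 /\ closed s1 /\ simeq s0 s1.
Definition Xf : envrel := {| envs := envsX; trip := tripX |}.

Lemma envsX_add : forall E a b, envsX E -> closed a -> closed b ->
  ((is_value a /\ is_value b) \/ (stuck a /\ stuck b)) -> simeq a b ->
  envsX (add_pair E a b).
Proof. intros E a b [Henv Hs] Ha Hb Hvs Hab. split.
  - intros x y [Hxy|[-> ->]]. apply Henv; auto.
    unfold normal_form. destruct Hvs as [[? ?]|[? ?]]; intuition.
  - intros x y [Hxy|[-> ->]]; auto.
Qed.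

Lemma Xf_bisim : env_bisim Xf.
Proof. split; [|split].
  - split; simpl. intros E [? _]; auto. intros E t0 t1 [[? _] [? [? _]]]; auto.
  - simpl. intros E s0 s1 [HE [Hc0 [Hc1 [S01 S10]]]]. split; [|split;[|split;[|split;[|split]]]].
    + intros t0' Hst. exists s1; split; [constructor|].
      unfold tripX; split; [auto|split;[exact (step_closed _ _ Hc0 Hst)|split;[auto|]]].
      unfold simeq; split. eapply sim_stepsL; eauto using steps_one. eapply sim_stepsR; eauto using steps_one.
    + intros Hv. destruct s0 as [| b0 | | |]; simpl in Hv; try contradiction.
      destruct (proj1 (sim_inv _ _ S01) b0 (steps_refl _)) as [b1 [Hs1 _]].
      exists (Lam b1); split; [auto|split;[simpl; auto|]].
      apply envsX_add; [auto|auto|exact (steps_closed _ _ Hc1 Hs1)|left; simpl; auto|unfold simeq; split; [eapply sim_stepsR; eauto|eapply sim_stepsL; eauto]].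
    + intros Hst. destruct (stuck_shape _ Hc0 Hst) as [E0 [t0 [HE0 ->]]].
      destruct (proj2 (sim_inv _ _ S01) E0 t0 HE0 (steps_refl _)) as [E1 [t1 [HE1 [Hs1 _]]]].
      exists (plugE E1 (Shift t1)); split; [auto|split;[apply stuck_pure_shift; auto|]].
      apply envsX_add; [auto|auto|exact (steps_closed _ _ Hc1 Hs1)|right; split; auto; apply stuck_pure_shift; auto|unfold simeq; split; [eapply sim_stepsR; eauto|eapply sim_stepsL; eauto]].
    + intros t1' Hst. exists s0; split; [constructor|].
      unfold tripX; split; [auto|split;[auto|split;[exact (step_closed _ _ Hc1 Hst)|]]].
      unfold simeq; split. eapply sim_stepsR; eauto using steps_one. eapply sim_stepsL; eauto using steps_one.
    + intros Hv. destruct s1 as [| b1 | | |]; simpl in Hv; try contradiction.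
      destruct (proj1 (sim_inv _ _ S10) b1 (steps_refl _)) as [b0 [Hs0 _]].
      exists (Lam b0); split; [auto|split;[simpl; auto|]].
      apply envsX_add; [auto|exact (steps_closed _ _ Hc0 Hs0)|auto|left; simpl; auto|unfold simeq; split; [eapply sim_stepsL; eauto|eapply sim_stepsR; eauto]].
    + intros Hst. destruct (stuck_shape _ Hc1 Hst) as [E1 [t1 [HE1 ->]]].
      destruct (proj2 (sim_inv _ _ S10) E1 t1 HE1 (steps_refl _)) as [E0 [t0 [HE0 [Hs0 _]]]].
      exists (plugE E0 (Shift t0)); split; [auto|split;[apply stuck_pure_shift; auto|]].
      apply envsX_add; [auto|exact (steps_closed _ _ Hc0 Hs0)|auto|right; split; auto; apply stuck_pure_shift; auto|unfold simeq; split; [eapply sim_stepsL; eauto|eapply sim_stepsR; eauto]].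
  - simpl. intros E [Henv HEs].
    assert (HR : forall a b, E a b -> closed a /\ closed b /\ simeq a b).
    { intros a b Hab. destruct (Henv a b Hab) as [? [? _]]; auto. }
    split.
    + intros b0 b1 v0 v1 Hb Hv0 Hv1 [Ht [Hcv0 Hcv1]].
      destruct (Henv _ _ Hb) as [Hcb0 [Hcb1 _]].
      assert (Hs : simeq (App (Lam b0) v0) (App (Lam b1) v1)).
      { apply (tilde_simeq E HR). apply ti_app; [apply ti_base; auto|auto].
        split; auto. split; auto. }
      assert (St0 : step (App (Lam b0) v0) (subst0 b0 v0)) by (apply (step_beta EHole); simpl; auto).
      assert (St1 : step (App (Lam b1) v1) (subst0 b1 v1)) by (apply (step_beta EHole); simpl; auto).
      unfold tripX; split; [split; auto|split;[apply closed_subst0; auto|split;[apply closed_subst0; auto|]]].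
      destruct Hs as [S01 S10]. unfold simeq; split.
      * eapply sim_stepsR; [eapply sim_stepsL; [exact S01|apply steps_one; exact St0]|apply steps_one; exact St1].
      * eapply sim_stepsR; [eapply sim_stepsL; [exact S10|apply steps_one; exact St1]|apply steps_one; exact St0].
    + intros E0 E1 s0 s1 HE0 HE1 Hst E0' E1' HE0' HE1' Hhat.
      destruct (Henv _ _ Hst) as [Hc0 [Hc1 _]].
      destruct (hat_wf _ _ _ Hhat) as [Hw0 Hw1].
      assert (Hca0 : closed (Reset (plugE E0' (plugE E0 (Shift s0))))).
      { unfold closed; simpl. apply wf_plugE; split; auto. }
      assert (Hca1 : closed (Reset (plugE E1' (plugE E1 (Shift s1))))).
      { unfold closed; simpl. apply wf_plugE; split; auto. }
      assert (Hs : simeq (Reset (plugE E0' (plugE E0 (Shift s0)))) (Reset (plugE E1' (plugE E1 (Shift s1))))).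
      { apply (tilde_simeq E HR); auto. apply ti_reset. apply hat_plug_tildeI; auto. apply ti_base; auto. }
      pose proof (shift_step2 E0' E0 s0 HE0' HE0) as St0.
      pose proof (shift_step2 E1' E1 s1 HE1' HE1) as St1.
      unfold tripX; split; [split; auto|split;[exact (step_closed _ _ Hca0 St0)|split;[exact (step_closed _ _ Hca1 St1)|]]].
      destruct Hs as [S01 S10]. unfold simeq; split.
      * eapply sim_stepsR; [eapply sim_stepsL; [exact S01|apply steps_one; exact St0]|apply steps_one; exact St1].
      * eapply sim_stepsR; [eapply sim_stepsL; [exact S10|apply steps_one; exact St1]|apply steps_one; exact St0].
Qed.

Lemma approx0_simeq : forall a b, approx0 a b -> closed a /\ closed b /\ simeq a b.
Proof. intros a b [X [HX Ht]]. pose proof HX as [[_ Wt] _]. destruct (Wt _ _ _ Ht) as [_ [? ?]].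
  split; [auto|split;[auto|]]. split. eapply approx_sim; eauto. eapply approx_sim_sym; eauto. Qed.

Lemma E0_envsX : envsX E0.
Proof. assert (HE : forall a b, E0 a b -> simeq a b).
  { intros a b [_ [_ [Ht [Ha Hb]]]]. eapply tilde_simeq; eauto. apply approx0_simeq. }
  split; auto. intros a b Hab. pose proof (HE a b Hab) as [Sab Sba].
  destruct Hab as [Na [Nb [Ht [Ha Hb]]]].
  split; [auto|split;[auto|split;[auto|split;[auto|]]]].
  destruct Na as [Va|Sa].
  - left; split; auto. destruct Nb as [Vb|Sb]; auto. exfalso.
    destruct a as [| a0 | | |]; simpl in Va; try contradiction.
    destruct (proj1 (sim_inv _ _ Sab) a0 (steps_refl _)) as [b1 [Hs _]].
    eapply stuck_steps_value; eauto; simpl; auto.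
  - right; split; auto. destruct Nb as [Vb|Sb]; auto. exfalso.
    destruct b as [| b0 | | |]; simpl in Vb; try contradiction.
    destruct (proj1 (sim_inv _ _ Sba) b0 (steps_refl _)) as [a1 [Hs _]].
    eapply stuck_steps_value; eauto; simpl; auto.
Qed.

Theorem lemma9 : forall t0 t1 : term,
  closed t0 -> closed t1 -> approx0 t0 t1 ->
  forall C : ctx, closed (plugC C t0) -> closed (plugC C t1) ->
  approx E0 (plugC C t0) (plugC C t1).
Proof. intros t0 t1 Hc0 Hc1 Ha C HC0 HC1. exists Xf. split. apply Xf_bisim.
  simpl. split; [apply E0_envsX|split;[auto|split;[auto|]]].
  apply (tilde_simeq approx0 approx0_simeq); auto.
  apply tildeI_plugC. apply ti_base; auto.
Qed.
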